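(* Let $a\geq 3$ and $m\geq 2a^2-a+2$ be integers. Every 2-coloring of $[C(m,a)]$ (with colors red and blue) in which $a-2$ is red and $a-1$ is blue admits a monochromatic solution of $L(m,a)$ in $[C(m,a)]$.
   Context: For integers $m\geq 3$, $a\geq 1$, $L(m,a)$ denotes the equation $x_1+x_2+\cdots+x_{m-1}=a x_m$. For a positive integer $n$, $[n]=\{1,\dots,n\}$. A solution of $L(m,a)$ in $[n]$ is an $m$-tuple $(x_1,\dots,x_m)\in[n]^m$ (entries not necessarily distinct) satisfying the equation; given a 2-coloring of $[n]$, it is monochromatic if all $x_i$ have the same color. $C(m,a)$ denotes $\left\lceil \frac{m-1}{a}\left\lceil \frac{m-1}{a}\right\rceil\right\rceil$. *)

(* Defs.v *)
From mathcomp Require Import all_boot.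
Set Implicit Arguments. Unset Strict Implicit. Unset Printing Implicit Defensive.

Definition ceil_div (p q : nat) : nat := (p + q - 1) %/ q.

(* C(m,a) = ceil( (m-1)/a * ceil((m-1)/a) ) = ceil( (m-1)*ceil((m-1)/a) / a ) *)
Definition Cma (m a : nat) : nat := ceil_div ((m - 1) * ceil_div (m - 1) a) a.

(* A solution of L(m,a): x_1 + ... + x_{m-1} = a x_m, the tuple indexed by
   'I_m, with x_m being the last coordinate (index m-1). *)
Definition is_solution (m a : nat) (x : nat -> nat) : Prop :=
  \sum_(0 <= i < m.-1) x i = a * x m.-1.

Definition in_range (n m : nat) (x : nat -> nat) : Prop :=
  forall i, i < m -> 1 <= x i <= n.

(* monochromatic w.r.t. coloring col : nat -> bool (true = red, false = blue) *)
Definition monochromatic (col : nat -> bool) (m : nat) (x : nat -> nat) : Prop :=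
  forall i, i < m -> col (x i) = col (x 0).

(* Main.v *)
Require Import Defs.
From mathcomp Require Import all_boot.
From mathcomp Require Import zify.
From Stdlib Require Import ArithRing.

Lemma sum_const_seg (f : nat -> nat) (lo hi c : nat) :
  (forall i, lo <= i < hi -> f i = c) ->
  \sum_(lo <= i < hi) f i = (hi - lo) * c.
Proof.
move=> H; rewrite (eq_big_nat _ _ H) sum_nat_const_nat //.
Qed.

Lemma mk_sol (a m n A B C c1 c2 c3 : nat) (col : nat -> bool) :
  m.-1 = c1 + c2 + c3 -> 0 < m ->
  c1 * A + c2 * B + c3 * C = a * C ->
  1 <= A <= n -> 1 <= B <= n -> 1 <= C <= n ->
  col A = col C -> col B = col C ->
  exists x : nat -> nat,
    in_range n m x /\ is_solution m a x /\ monochromatic col m x.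
Proof.
move=> Hm Hm0 He HA HB HC cA cB.
pose x := fun i => if i < c1 then A else if i < c1 + c2 then B else C.
have xC : forall i, col (x i) = col C.
  by move=> i; rewrite /x; case: ifP => _ //; case: ifP.
exists x; split; [|split].
- move=> i _; rewrite /x; case: ifP => _ //; case: ifP => _ //.
- rewrite /is_solution.
  have -> : x m.-1 = C by rewrite /x Hm; case: ifP => h; [lia|case: ifP => h'; lia].
  rewrite Hm (@big_cat_nat _ _ _ c1) //=; last by lia.
  rewrite (@big_cat_nat _ _ _ (c1 + c2) c1) //=; try lia.
  rewrite (@sum_const_seg x 0 c1 A); last by move=> i hi; rewrite /x; case: ifP => //; lia.
  rewrite (@sum_const_seg x c1 (c1 + c2) B); last first.
    by move=> i hi; rewrite /x; case: ifP => h1; [lia|case: ifP => //; lia].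
  rewrite (@sum_const_seg x (c1 + c2) (c1 + c2 + c3) C); last first.
    by move=> i hi; rewrite /x; case: ifP => h1; [lia|case: ifP => //; lia].
  have e2 : c1 + c2 - c1 = c2 by lia.
  have e3 : c1 + c2 + c3 - (c1 + c2) = c3 by lia.
  by rewrite subn0 e2 e3 addnA.
- by move=> i _; rewrite !xC.
Qed.

Lemma Cma_ge (a m : nat) : 3 <= a -> 2 * a ^ 2 - a + 2 <= m ->
  2 * m.-1 <= Cma m a.
Proof.
move=> Ha Hm.
have a0 : 0 < a by lia.
have Hk : 2 * a <= ceil_div (m - 1) a.
  rewrite /ceil_div.
  have -> : 2 * a = (2 * a * a) %/ a by rewrite mulnK.
  apply: leq_div2r.
  have : a ^ 2 = a * a by rewrite expnS expn1.
  lia.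
rewrite /Cma /ceil_div.
have -> : 2 * m.-1 = (m.-1 * (2 * a)) %/ a by rewrite mulnA mulnK // mulnC.
apply: leq_div2r.
have h : m.-1 * (2 * a) <= m.-1 * ceil_div (m - 1) a.
  by rewrite leq_mul2l Hk orbT.
have e : m - 1 = m.-1 by lia.
rewrite /ceil_div e in h; rewrite e. lia.
Qed.

Theorem proposition2 (a m : nat) (col : nat -> bool) :
  3 <= a -> 2 * a ^ 2 - a + 2 <= m ->
  col (a - 2) = true -> col (a - 1) = false ->
  exists x : nat -> nat,
    in_range (Cma m a) m x /\ is_solution m a x /\ monochromatic col m x.
Proof.
move=> Ha Hm cR cB.
have Hn := @Cma_ge a m Ha Hm.
set n := Cma m a in Hn *.
have a2 : a ^ 2 = a * a by rewrite expnS expn1.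
have Hv : a + 1 <= m.-1 by nia.
have m0 : 0 < m by lia.
have [w Hw] : exists w, m.-1 = a + w /\ 1 <= w.
  by exists (m.-1 - a); lia.
case: Hw => Hw w1.
have [c [Hc|Hc]] : exists c, a = 2 * c + 4 \/ a = 2 * c + 3.
  have := odd_double_half a; case: (odd a) => /= h.
  - exists (a./2 - 1); right; lia.
  - exists (a./2 - 2); left; lia.
-
  rewrite Hc in cR cB.
  have e1 : 2 * c + 4 - 2 = 2 * c + 2 by lia.
  have e2 : 2 * c + 4 - 1 = 2 * c + 3 by lia.
  rewrite e1 in cR; rewrite e2 in cB.
  case cV: (col (2 * c + 2 + w)).
  + apply: (@mk_sol a m n (2*c+2) (2*c+2) (2*c+2+w) (2*c+2+w) 0 2);
      rewrite ?cV ?cR //; rewrite ?Hc; nia.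
  case cW: (col (2 * c + 2 + 2 * w)).
  + apply: (@mk_sol a m n (2*c+2) (2*c+2) (2*c+2+2*w) (c+1+w) 0 (c+3));
      rewrite ?cW ?cR //; rewrite ?Hc; nia.
  + apply: (@mk_sol a m n (2*c+3) (2*c+2+w) (2*c+2+2*w) w (2*c+3) 1);
      rewrite ?cW ?cB ?cV //; rewrite ?Hc; nia.
-
  rewrite Hc in cR cB.
  have e1 : 2 * c + 3 - 2 = 2 * c + 1 by lia.
  have e2 : 2 * c + 3 - 1 = 2 * c + 2 by lia.
  rewrite e1 in cR; rewrite e2 in cB.
  case cV: (col (2 * c + 2 + w)); last first.
  + apply: (@mk_sol a m n (2*c+2) (2*c+2) (2*c+2+w) (2*c+2+w) 0 1);
      rewrite ?cV ?cB //; rewrite ?Hc; nia.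
  case cW: (col (2 * c + 2 + 2 * w)); last first.
  + apply: (@mk_sol a m n (2*c+2) (2*c+2) (2*c+2+2*w) (c+1+w) 0 (c+2));
      rewrite ?cW ?cB //; rewrite ?Hc; nia.
  + apply: (@mk_sol a m n (2*c+1) (2*c+2+w) (2*c+2+2*w) w (2*c+1) 2);
      rewrite ?cW ?cR ?cV //; rewrite ?Hc; nia.
Qed.
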